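(* Let $(V,\rho)$ be a finite rank torsion free $\mathfrak{sl}(2)$-module. If $(V,\rho)$ is a simple $\mathfrak{sl}(2)$-module, then its rationalization $F_{\mathrm{rat}}(V,\rho)$ is an $\mathcal R$-irreducible rational module. Conversely, if $F_{\mathrm{rat}}(V,\rho)$ is an $\mathcal R$-irreducible rational module, then either $(V,\rho)$ is a simple $\mathfrak{sl}(2)$-module or it has a unique simple $\mathfrak{sl}(2)$-submodule $(V',\rho')\subseteq(V,\rho)$ which is an essential submodule.
   Context: $\mathfrak{sl}(2)$ has basis $L_{-1}=f$, $L_0=-\tfrac12 h$, $L_1=-e$ for a Chevalley basis $e,f,h$. An $\mathfrak{sl}(2)$-module $(V,\rho)$ is a $\mathbb{C}[z]$-module via $z\cdot v=\rho(L_0)v$; it is finite rank torsion free if torsion free as a $\mathbb{C}[z]$-module and $S^{-1}V$ is finite-dimensional over $\mathbb{C}(z)$, $S=\mathbb{C}[z]\setminus\{0\}$. A submodule $V'\subseteq V$ is essential if $V/V'$ is a torsion $\mathbb{C}[z]$-module. The rationalization is $F_{\mathrm{rat}}(V,\rho)=(S^{-1}V,\rho_{\mathrm{rat}})$ with $\rho_{\mathrm{rat}}(L_{\pm1})(v/p(z))=\rho(L_{\pm1})(v)/p(z\pm1)$, $\rho_{\mathrm{rat}}(L_0)(v/p(z))=zv/p(z)$. A rational module (an $\mathfrak{sl}(2)$-module that is a finite-dimensional $\mathbb{C}(z)$-vector space with $z$ acting by $L_0$) is $\mathcal R$-irreducible if it is nonzero and has no nonzero proper $\mathfrak{sl}(2)$-submodule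 that is a $\mathbb{C}(z)$-subspace. *)

(* Defs.v *)
From HB Require Import structures.
From mathcomp Require Import all_boot all_order all_algebra.
From mathcomp Require Import complex.
From mathcomp Require Import reals.

Set Implicit Arguments.
Unset Strict Implicit.
Unset Printing Implicit Defensive.

Import Order.TTheory GRing.Theory Num.Theory.
Local Open Scope ring_scope.

Record sl2_module (C : fieldType) (V : lmodType C) := Sl2Module {
  rho_e : {linear V -> V};
  rho_f : {linear V -> V};
  rho_h : {linear V -> V};
  rel_he : forall v, rho_h (rho_e v) - rho_e (rho_h v) = 2%:R *: rho_e v;
  rel_hf : forall v, rho_h (rho_f v) - rho_f (rho_h v) = - (2%:R *: rho_f v);
  rel_ef : forall v, rho_e (rho_f v) - rho_f (rho_e v) = rho_h v
}.

Section Defs.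
Variables (C : fieldType) (V : lmodType C) (rho : sl2_module V).

Definition Lm1 (v : V) : V := rho_f rho v.
Definition L0 (v : V) : V := - ((2%:R)^-1 *: rho_h rho v).
Definition L1 (v : V) : V := - rho_e rho v.

(* C[z]-module structure: p(z) . v = p(L_0) v *)
Definition pact (p : {poly C}) (v : V) : V :=
  \sum_(i < size p) p`_i *: iter i L0 v.

Definition is_submodule (U : V -> Prop) : Prop :=
  [/\ U 0,
      (forall u w, U u -> U w -> U (u + w)),
      (forall (a : C) u, U u -> U (a *: u)) &
      [/\ (forall u, U u -> U (rho_e rho u)),
          (forall u, U u -> U (rho_f rho u)) &
          (forall u, U u -> U (rho_h rho u))]].

Definition simple_submodule (U : V -> Prop) : Prop :=
  [/\ is_submodule U,
      (exists u, U u /\ u <> 0) &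
      (forall U', is_submodule U' -> (forall u, U' u -> U u) ->
         (forall u, U' u -> u = 0) \/ (forall u, U u -> U' u))].

Definition simple_module : Prop := simple_submodule (fun _ => True).

Definition torsion_free : Prop :=
  forall (p : {poly C}) (v : V), p != 0 -> pact p v = 0 -> v = 0.

(* U is essential: V / U is a torsion C[z]-module *)
Definition essential (U : V -> Prop) : Prop :=
  forall v, exists2 p : {poly C}, p != 0 & U (pact p v).

(* ---- The localization S^{-1}V, S = C[z] \ {0}, represented by fractions
   v / p (pairs (v,p), p <> 0) modulo the usual equivalence. ---- *)
Definition frac_eq (x y : V * {poly C}) : Prop :=
  exists2 s : {poly C}, s != 0 & pact s (pact y.2 x.1 - pact x.2 y.1) = 0.

Definition is_frac (x : V * {poly C}) : bool := x.2 != 0.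

Definition frac_add (x y : V * {poly C}) : V * {poly C} :=
  (pact y.2 x.1 + pact x.2 y.1, x.2 * y.2).

Definition frac_scale (a b : {poly C}) (x : V * {poly C}) : V * {poly C} :=
  (pact a x.1, b * x.2).

Fixpoint frac_comb (l : seq ({poly C} * {poly C} * (V * {poly C}))) :
    V * {poly C} :=
  match l with
  | [::] => (0, 1)
  | c :: l' => frac_add (frac_scale c.1.1 c.1.2 c.2) (frac_comb l')
  end.

(* V has finite rank: S^{-1}V is finite dimensional over C(z) *)
Definition finite_rank : Prop :=
  exists basis : seq (V * {poly C}),
    all is_frac basis /\
    forall x, is_frac x ->
      exists coefs : seq ({poly C} * {poly C}),
        [/\ size coefs = size basis, all (fun c => c.2 != 0) coefs &
            frac_eq x (frac_comb (zip coefs basis))].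

Definition finite_rank_torsion_free : Prop := torsion_free /\ finite_rank.

Definition rat_Lp1 (x : V * {poly C}) : V * {poly C} :=
  (L1 x.1, x.2 \Po ('X + 1)).
Definition rat_Lm1 (x : V * {poly C}) : V * {poly C} :=
  (Lm1 x.1, x.2 \Po ('X - 1)).
Definition rat_L0 (x : V * {poly C}) : V * {poly C} := (L0 x.1, x.2).

(* W (a set of fractions, closed under the equivalence) is a C(z)-subspace
   of S^{-1}V stable under rho_rat *)
Definition rat_submodule (W : V * {poly C} -> Prop) : Prop :=
  [/\ (forall x y, is_frac x -> is_frac y -> frac_eq x y -> W x -> W y),
      (forall x, W x -> is_frac x) /\ W (0, 1),
      (forall x y, W x -> W y -> W (frac_add x y)),
      (forall a b x, b != 0 -> W x -> W (frac_scale a b x)) &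
      [/\ (forall x, W x -> W (rat_Lp1 x)),
          (forall x, W x -> W (rat_Lm1 x)) &
          (forall x, W x -> W (rat_L0 x))]].

Definition R_irreducible_rat : Prop :=
  (exists x, is_frac x /\ ~ frac_eq x (0, 1)) /\
  forall W, rat_submodule W ->
    (forall x, W x -> frac_eq x (0, 1)) \/ (forall x, is_frac x -> W x).

End Defs.

(* Main.v *)
Require Import Defs.
From HB Require Import structures.
From mathcomp Require Import all_boot all_order all_algebra.
From mathcomp Require Import complex.
From mathcomp Require Import reals.
From mathcomp Require Import ring.
From Stdlib Require Import Classical ClassicalEpsilon.
Set Implicit Arguments. Unset Strict Implicit. Unset Printing Implicit Defensive.
Import Order.TTheory GRing.Theory Num.Theory.
Local Open Scope ring_scope.

Section PolyBound.
Variable C : numClosedFieldType.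
Implicit Types (p q g h : {poly C}) (s t : C).

Definition sh (t : C) p := p \Po ('X + t%:P).

Lemma shK t p : sh (- t) (sh t p) = p.
Proof. by rewrite /sh polyCN comp_polyXaddC_K. Qed.

Lemma shKN t p : sh t (sh (- t) p) = p.
Proof. by have := shK (- t) p; rewrite opprK. Qed.

Lemma sh_eq0 t p : (sh t p == 0) = (p == 0).
Proof. by rewrite /sh comp_poly2_eq0 // size_XaddC. Qed.

Lemma shM t p q : sh t (p * q) = sh t p * sh t q.
Proof. exact: comp_polyM. Qed.

Lemma compXn p q n : (p ^+ n) \Po q = (p \Po q) ^+ n.
Proof. by elim: n => [|n IH]; rewrite ?expr0 ?comp_polyC // !exprS comp_polyM IH. Qed.

Lemma sh_XsubC t c n : sh t (('X - c%:P) ^+ n) = ('X - (c - t)%:P) ^+ n.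
Proof.
rewrite /sh compXn comp_polyB comp_polyX comp_polyC polyCB.
by congr (_ ^+ _); rewrite opprB addrA.
Qed.

Lemma dvd_sh t c n p : ('X - c%:P) ^+ n %| p -> ('X - (c - t)%:P) ^+ n %| sh t p.
Proof. by move=> h; rewrite -sh_XsubC; apply: dvdp_comp_poly. Qed.

Lemma mup_sh s t p : p != 0 -> mup s (sh t p) = mup (s + t) p.
Proof.
move=> p0; have sp0 : sh t p != 0 by rewrite sh_eq0.
apply/eqP; rewrite eqn_leq !mup_geq //; apply/andP; split.
  have h1 : ('X - s%:P) ^+ (mup s (sh t p)) %| sh t p by rewrite -mup_geq.
  by have := dvd_sh (- t) h1; rewrite shK opprK.
have h2 : ('X - (s + t)%:P) ^+ (mup (s + t) p) %| p by rewrite -mup_geq.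
by have := dvd_sh t h2; rewrite addrK.
Qed.

Lemma mup_dvd s p q : p %| q -> q != 0 -> (mup s p <= mup s q)%N.
Proof.
move=> pq q0; have p0 : p != 0 by apply: contraNneq q0 => p0; move: pq; rewrite p0 dvd0p.
by rewrite mup_geq //; apply: dvdp_trans pq; rewrite -mup_geq.
Qed.

Lemma mup_iter t g h : g != 0 -> h != 0 -> g %| sh t g * h ->
  forall k s, (mup s g <= \sum_(j < k) mup (s + j%:R * t) h + mup (s + k%:R * t) g)%N.
Proof.
move=> g0 h0 gd; elim=> [|k IH] s; first by rewrite big_ord0 mul0r addr0.
apply: (leq_trans (IH s)); rewrite big_ord_recr /= -addnA leq_add2l.
set s' := s + k%:R * t.
have sg0 : sh t g != 0 by rewrite sh_eq0.
have q0 : sh t g * h != 0 by rewrite mulf_neq0.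
have := mup_dvd s' gd q0; rewrite (mupM _ sg0 h0) (mup_sh _ _ g0).
have -> : s + k.+1%:R * t = s' + t by rewrite /s' -addrA -natr1 mulrDl mul1r.
by rewrite addnC.
Qed.

Lemma nonroot_exists s t g : g != 0 -> t != 0 -> exists k, mup (s + k%:R * t) g = 0%N.
Proof.
move=> g0 t0.
pose rs := [seq s + k%:R * t | k <- iota 0 (size g)].
have : ~~ all (root g) rs.
  apply/negP => hall.
  have u : uniq rs.
    rewrite map_inj_uniq ?iota_uniq // => a b /addrI /(mulIf t0) /eqP.
    by rewrite eqr_nat => /eqP.
  by have := max_poly_roots g0 hall u; rewrite size_map size_iota ltnn.
case/allPn=> x /mapP [k _ ->] nr; exists k; exact: mupNroot.
Qed.

Lemma sum_pos k (f : nat -> nat) m : (0 < m)%N -> (m <= \sum_(j < k) f j)%N ->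
  exists j, (0 < f j)%N.
Proof.
move=> m0 hm; apply: not_all_not_ex => hn.
move: hm; rewrite big1 => [|j _].
  by rewrite leqn0 => /eqP m00; rewrite m00 in m0.
by apply/eqP; rewrite -leqn0 leqNgt; apply/negP/hn.
Qed.

Lemma sum_trunc (f : nat -> nat) T k : (forall j, (T < j)%N -> f j = 0%N) ->
  (\sum_(j < k) f j <= \sum_(j < T.+1) f j)%N.
Proof.
move=> hf; have e n : \sum_(j < n) f j = \sum_(0 <= j < n) f j by rewrite big_mkord.
rewrite !e; case: (leqP k T.+1) => hk.
  by rewrite (big_cat_nat (leq0n k) hk) /= leq_addr.
rewrite (big_cat_nat (leq0n T.+1) (ltnW hk)) /=.
have -> : \sum_(T.+1 <= i < k) f i = 0%N.
  by rewrite big_nat_cond big1 // => j /andP[/andP[hj _] _]; apply: hf.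
by rewrite addr0.
Qed.

Lemma T_pairs (l : seq (C * C)) : exists T, forall pr, pr \in l ->
  forall n : nat, pr.1 - pr.2 = n%:R -> (n <= T)%N.
Proof.
elim: l => [|pr l [T hT]]; first by exists 0%N.
have [T1 hT1] : exists T1, forall n : nat, pr.1 - pr.2 = n%:R -> (n <= T1)%N.
  case: (classic (exists n0 : nat, pr.1 - pr.2 = n0%:R)) => [[n0 e0]|hn].
    exists n0 => n e; move: e; rewrite e0 => /eqP; rewrite eqr_nat => /eqP ->.
    exact: leqnn.
  by exists 0%N => n e; case: hn; exists n.
exists (maxn T T1) => q; rewrite in_cons => /orP[/eqP -> | ql] n e.
  by rewrite leq_max (hT1 n e) orbT.
by rewrite leq_max (hT q ql n e).
Qed.

Lemma roots_list h : h != 0 -> exists rs : seq C, forall r, root h r -> r \in rs.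
Proof.
move=> h0; have [rs e] := closed_field_poly_normal h; exists rs => r.
by rewrite {1}e rootZ ?lead_coef_eq0 // root_prod_XsubC.
Qed.

Lemma mup_prod_sh s h n : h != 0 ->
  mup s (\prod_(j < n) sh (j%:R) h) = \sum_(j < n) mup (s + j%:R) h.
Proof.
move=> h0; elim: n => [|n IH]; first by rewrite !big_ord0 mupNroot // root1.
rewrite !big_ord_recr /= mupM ?sh_eq0 // ?mup_sh ?IH //.
by apply/prodf_neq0 => i _; rewrite sh_eq0.
Qed.

Lemma dvd_of_mup g G : g != 0 -> G != 0 -> (forall s, (mup s g <= mup s G)%N) -> g %| G.
Proof.
move=> g0 G0 hm; have [rs e] := closed_field_poly_normal g.
have lc0 : lead_coef g != 0 by rewrite lead_coef_eq0.
have hc : forall s, (count_mem s rs <= mup s G)%N.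
  have P0 : \prod_(z <- rs) ('X - z%:P) != 0.
    by apply: monic_neq0; apply: monic_prod_XsubC.
  move=> s; rewrite -mu_prod_XsubC; apply: leq_trans (hm s).
  rewrite mup_geq //.
  by rewrite [X in _ %| X]e dvdpZr // -mup_geq.
rewrite e dvdpZl //; elim: rs G G0 {e hm} hc => [|r rs IH] G G0 hc.
  by rewrite big_nil dvd1p.
have rG : 'X - r%:P %| G.
  by rewrite XsubC_dvd //; apply: leq_trans (hc r); rewrite /= eqxx.
set G' := G %/ ('X - r%:P).
have eG : G = G' * ('X - r%:P) by rewrite divpK.
have G'0 : G' != 0 by apply: contraNneq G0; rewrite eG => ->; rewrite mul0r.
rewrite big_cons eG (mulrC G') dvdp_mul2l ?polyXsubC_eq0 //.
apply: IH => // s; have := hc s; rewrite eG mupM ?polyXsubC_eq0 //.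
rewrite -(expr1 ('X - r%:P)) mup_XsubCX /= addnC.
by case: (r == s); rewrite ?leq_add2r // ?add0n.
Qed.

Lemma poly_bound h h' : h != 0 -> h' != 0 -> exists2 G, G != 0 &
  forall g, g != 0 -> g %| sh 1 g * h -> g %| sh (-1) g * h' -> g %| G.
Proof.
move=> h0 h'0.
have [rs hrs] := roots_list h0.
have [rs' hrs'] := roots_list h'0.
have [T hT] := T_pairs [seq (r, r') | r <- rs, r' <- rs'].
exists (\prod_(j < T.+1) sh (j%:R) h).
  by apply/prodf_neq0 => i _; rewrite sh_eq0.
move=> g g0 gd gd'; apply: dvd_of_mup => //.
  by apply/prodf_neq0 => i _; rewrite sh_eq0.
move=> s; rewrite mup_prod_sh //.
case: (posnP (mup s g)) => [->//|mpos].
have [k hk] := nonroot_exists s g0 (oner_neq0 C).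
have m1 := mup_iter g0 h0 gd k s; rewrite hk addn0 in m1.
have n10 : (-1 : C) != 0 by rewrite oppr_eq0 oner_neq0.
have [k' hk'] := nonroot_exists s g0 n10.
have m2 := mup_iter g0 h'0 gd' k' s; rewrite hk' addn0 in m2.
have [j' hj'] := @sum_pos k' (fun j => mup (s + j%:R * -1) h') _ mpos m2.
have r'in : s + j'%:R * -1 \in rs'.
  by apply: hrs'; rewrite -dvdp_XsubCl XsubC_dvd.
apply: (leq_trans m1 _); under eq_bigr => j _ do rewrite mulr1.
apply: (@sum_trunc (fun j => mup (s + j%:R) h)) => j hj; apply/eqP; rewrite -leqn0 leqNgt; apply/negP => pj.
have rin : s + j%:R \in rs by apply: hrs; rewrite -dvdp_XsubCl XsubC_dvd.
have e : s + j%:R - (s + j'%:R * -1) = (j + j')%:R :> C by rewrite natrD; ring.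
have := hT _ (allpairs_f pair rin r'in) (j + j')%N e.
by rewrite leqNgt (leq_trans hj) ?leq_addr.
Qed.

End PolyBound.
Require Import Defs.
From HB Require Import structures.
From mathcomp Require Import all_boot all_order all_algebra.
From mathcomp Require Import complex.
From mathcomp Require Import reals.
From mathcomp Require Import ring.
From Stdlib Require Import Classical ClassicalEpsilon.
Set Implicit Arguments. Unset Strict Implicit. Unset Printing Implicit Defensive.
Import Order.TTheory GRing.Theory Num.Theory.
Local Open Scope ring_scope.

Section Main.
Variables (C : numClosedFieldType) (V : lmodType C) (rho : sl2_module V).

Local Notation L0 := (L0 rho).
Local Notation L1 := (L1 rho).
Local Notation Lm1 := (Lm1 rho).
Local Notation pact := (pact rho).
Implicit Types (p q : {poly C}) (u v w : V).

Lemma L0D u w : L0 (u + w) = L0 u + L0 w.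
Proof. by rewrite /Defs.L0 linearD scalerDr opprD. Qed.
Lemma L0Z a u : L0 (a *: u) = a *: L0 u.
Proof.
rewrite /Defs.L0; have -> : rho_h rho (a *: u) = a *: rho_h rho u by apply: linearZ.
by rewrite scalerA mulrC -scalerA scalerN.
Qed.
Lemma L1D u w : L1 (u + w) = L1 u + L1 w.
Proof. by rewrite /Defs.L1 linearD opprD. Qed.
Lemma L1Z a u : L1 (a *: u) = a *: L1 u.
Proof.
rewrite /Defs.L1; have -> : rho_e rho (a *: u) = a *: rho_e rho u by apply: linearZ.
by rewrite scalerN.
Qed.
Lemma Lm1D u w : Lm1 (u + w) = Lm1 u + Lm1 w.
Proof. by rewrite /Defs.Lm1 linearD. Qed.
Lemma Lm1Z a u : Lm1 (a *: u) = a *: Lm1 u.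
Proof. by apply: linearZ. Qed.

Lemma additive_sum (f : V -> V) n (F : 'I_n -> V) :
  (forall u w, f (u + w) = f u + f w) ->
  f (\sum_(i < n) F i) = \sum_(i < n) f (F i).
Proof.
move=> fD; have f0 : f 0 = 0.
  have := fD 0 0; rewrite addr0 => /(congr1 (fun x => x - f 0)).
  by rewrite addrK subrr.
elim: n F => [|n IH] F; first by rewrite !big_ord0.
by rewrite !big_ord_recr /= fD IH.
Qed.

Lemma L00 : L0 0 = 0.
Proof. by rewrite /Defs.L0 linear0 scaler0 oppr0. Qed.

Lemma iterL0Z0 i : iter i L0 0 = 0.
Proof. by elim: i => //= i ->; rewrite L00. Qed.

Lemma iterL0D i u w : iter i L0 (u + w) = iter i L0 u + iter i L0 w.
Proof. by elim: i => //= i ->; rewrite L0D. Qed.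
Lemma iterL0Z i a u : iter i L0 (a *: u) = a *: iter i L0 u.
Proof. by elim: i => //= i ->; rewrite L0Z. Qed.

Lemma pact_widen n (p : {poly C}) (v : V) : (size p <= n)%N ->
  pact p v = \sum_(i < n) p`_i *: iter i L0 v.
Proof.
move=> hn; rewrite /Defs.pact (big_ord_widen n (fun i => p`_i *: iter i L0 v) hn).
rewrite big_mkcond /=; apply: eq_bigr => i _.
by case: ifP => // /negbT; rewrite -leqNgt => /(nth_default 0) ->; rewrite scale0r.
Qed.

Lemma pactD p q v : pact (p + q) v = pact p v + pact q v.
Proof.
set n := maxn (size p) (size q).
rewrite (@pact_widen n (p + q)); last by rewrite (leq_trans (size_polyD _ _)).
rewrite (@pact_widen n p) ?leq_maxl // (@pact_widen n q) ?leq_maxr //.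
by rewrite -big_split /=; apply: eq_bigr => i _; rewrite coefD scalerDl.
Qed.

Lemma pactZl a p v : pact (a *: p) v = a *: pact p v.
Proof.
rewrite (@pact_widen (size p) (a *: p)) ?size_scale_leq // /Defs.pact scaler_sumr.
by apply: eq_bigr => i _; rewrite coefZ scalerA.
Qed.

Lemma pact0 v : pact 0 v = 0.
Proof. by rewrite /Defs.pact size_poly0 big_ord0. Qed.

Lemma pactN p v : pact (- p) v = - pact p v.
Proof. by rewrite -(scaleN1r p) pactZl scaleN1r. Qed.

Lemma pactB p q v : pact (p - q) v = pact p v - pact q v.
Proof. by rewrite pactD pactN. Qed.

Lemma pactDr p u w : pact p (u + w) = pact p u + pact p w.
Proof.
rewrite /Defs.pact -big_split /=; apply: eq_bigr => i _.
by rewrite iterL0D scalerDr.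
Qed.

Lemma pactZr p a u : pact p (a *: u) = a *: pact p u.
Proof.
rewrite /Defs.pact scaler_sumr; apply: eq_bigr => i _.
by rewrite iterL0Z !scalerA mulrC.
Qed.

Lemma pactr0 p : pact p 0 = 0.
Proof. by rewrite /Defs.pact big1 // => i _; rewrite iterL0Z0 scaler0. Qed.

Lemma pactNr p u : pact p (- u) = - pact p u.
Proof. by rewrite -(scaleN1r u) pactZr scaleN1r. Qed.

Lemma pactBr p u w : pact p (u - w) = pact p u - pact p w.
Proof. by rewrite pactDr pactNr. Qed.

Lemma pactC c v : pact c%:P v = c *: v.
Proof.
rewrite (@pact_widen 1) ?size_polyC ?leq_b1 // big_ord1 /=.
by rewrite coefC eqxx.
Qed.

Lemma pact1 v : pact 1 v = v.
Proof. by rewrite -polyC1 pactC scale1r. Qed.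

Lemma pactL0 p v : pact p (L0 v) = L0 (pact p v).
Proof.
rewrite /Defs.pact (additive_sum _ L0D); apply: eq_bigr => i _.
by rewrite L0Z -iterSr.
Qed.

Lemma pactMX p v : pact (p * 'X) v = L0 (pact p v).
Proof.
have [->|p0] := eqVneq p 0; first by rewrite mul0r !pact0 L00.
rewrite (@pact_widen (size p).+1 (p * 'X)) ?size_mulX //.
rewrite big_ord_recl coefMX eqxx scale0r add0r /Defs.pact.
rewrite (additive_sum _ L0D); apply: eq_bigr => i _.
by rewrite L0Z coefMX /=.
Qed.

Lemma pactM p q v : pact (p * q) v = pact p (pact q v).
Proof.
elim/poly_ind: q v => [|q c IH] v; first by rewrite mulr0 !pact0 pactr0.
rewrite mulrDr mulrA pactD pactMX IH -pactL0 (mulrC p c%:P) mul_polyC pactZl.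
by rewrite pactD pactMX pactC pactDr pactZr.
Qed.

Lemma two_neq0 : (2%:R : C) != 0.
Proof. by rewrite pnatr_eq0. Qed.

Local Notation E := (rho_e rho).
Local Notation F := (rho_f rho).
Local Notation H := (rho_h rho).

Lemma EZ a x : E (a *: x) = a *: E x. Proof. exact: linearZ. Qed.
Lemma FZ a x : F (a *: x) = a *: F x. Proof. exact: linearZ. Qed.
Lemma HZ a x : H (a *: x) = a *: H x. Proof. exact: linearZ. Qed.
Lemma EN x : E (- x) = - E x. Proof. exact: linearN. Qed.
Lemma FN x : F (- x) = - F x. Proof. exact: linearN. Qed.
Lemma HN x : H (- x) = - H x. Proof. exact: linearN. Qed.

Lemma L1L0 v : L1 (L0 v) = L0 (L1 v) + L1 v.
Proof.
rewrite /Defs.L1 /Defs.L0 EN EZ HN opprK scalerN opprK.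
have -> : H (E v) = E (H v) + 2%:R *: E v.
  by rewrite -(rel_he rho v) addrC subrK.
by rewrite scalerDr scalerA mulVf ?two_neq0 // scale1r addrK.
Qed.

Lemma Lm1L0 v : Lm1 (L0 v) = L0 (Lm1 v) - Lm1 v.
Proof.
rewrite /Defs.Lm1 /Defs.L0 FN FZ.
have -> : H (F v) = F (H v) - 2%:R *: F v.
  by rewrite -(rel_hf rho v) addrC subrK.
by rewrite scalerDr scalerN scalerA mulVf ?two_neq0 // scale1r opprD opprK addrK.
Qed.

Lemma L1Lm1 v : L1 (Lm1 v) = Lm1 (L1 v) + 2%:R *: L0 v.
Proof.
rewrite /Defs.L1 /Defs.Lm1 /Defs.L0 FN scalerN scalerA mulfV ?two_neq0 // scale1r.
by rewrite -(rel_ef rho v) opprB addKr.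
Qed.

Lemma pact_shift (A : V -> V) (t : C) :
  (forall u w, A (u + w) = A u + A w) -> (forall a u, A (a *: u) = a *: A u) ->
  (forall w, A (L0 w) = L0 (A w) + t *: A w) ->
  forall p w, A (pact p w) = pact (sh t p) (A w).
Proof.
move=> AD AZ AL p w.
have A0 : A 0 = 0 by have := AZ 0 0; rewrite !scale0r.
elim/poly_ind: p => [|q c IH]; first by rewrite /sh comp_poly0 !pact0 A0.
have -> : sh t (q * 'X + c%:P) = sh t q * 'X + t *: sh t q + c%:P.
  by rewrite /sh comp_poly_MXaddC mulrDr -mul_polyC (mulrC t%:P).
rewrite pactD pactMX pactC AD AZ AL IH !pactD pactMX pactC pactZl.
done.
Qed.

Lemma L1_pact p w : L1 (pact p w) = pact (sh 1 p) (L1 w).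
Proof. by apply: pact_shift; [exact: L1D|exact: L1Z|move=> x; rewrite L1L0 scale1r]. Qed.

Lemma Lm1_pact p w : Lm1 (pact p w) = pact (sh (-1) p) (Lm1 w).
Proof. by apply: pact_shift; [exact: Lm1D|exact: Lm1Z|move=> x; rewrite Lm1L0 scaleN1r]. Qed.

Lemma pactC_comm p q v : pact p (pact q v) = pact q (pact p v).
Proof. by rewrite -!pactM mulrC. Qed.

Lemma L0_pact v : L0 v = pact 'X v.
Proof. by rewrite -(mul1r 'X) pactMX pact1. Qed.

Definition feq (x y : V * {poly C}) := pact y.2 x.1 = pact x.2 y.1.

Lemma pact_inj (tf : torsion_free rho) p u w : p != 0 -> pact p u = pact p w -> u = w.
Proof.
move=> p0 h; apply/eqP; rewrite -subr_eq0; apply/eqP.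
by apply: (tf p) => //; rewrite pactBr h subrr.
Qed.

Lemma pact_eq0 (tf : torsion_free rho) p u : p != 0 -> pact p u = 0 -> u = 0.
Proof. by move=> p0 h; apply: (tf p). Qed.

Lemma frac_eqP (tf : torsion_free rho) x y : frac_eq rho x y <-> feq x y.
Proof.
split=> [[s s0 h]|h]; last by exists 1; rewrite ?oner_neq0 // pact1 h subrr.
by apply/eqP; rewrite -subr_eq0; apply/eqP; apply: (tf s).
Qed.

Section Sub.
Variable U : V -> Prop.
Hypothesis sU : is_submodule rho U.

Lemma sub0 : U 0. Proof. by case: sU. Qed.
Lemma subD u w : U u -> U w -> U (u + w). Proof. by case: sU => _ h _ _; apply: h. Qed.
Lemma subZ a u : U u -> U (a *: u). Proof. by case: sU => _ _ h _; apply: h. Qed.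
Lemma subE u : U u -> U (E u). Proof. by case: sU => _ _ _ [h _ _]; apply: h. Qed.
Lemma subF u : U u -> U (F u). Proof. by case: sU => _ _ _ [_ h _]; apply: h. Qed.
Lemma subH u : U u -> U (H u). Proof. by case: sU => _ _ _ [_ _ h]; apply: h. Qed.
Lemma subN u : U u -> U (- u). Proof. by move=> h; rewrite -scaleN1r; apply: subZ. Qed.
Lemma subL0 u : U u -> U (L0 u). Proof. by move=> h; apply/subN/subZ/subH. Qed.
Lemma subL1 u : U u -> U (L1 u). Proof. by move=> h; apply/subN/subE. Qed.
Lemma subLm1 u : U u -> U (Lm1 u). Proof. exact: subF. Qed.
Lemma subiter i u : U u -> U (iter i L0 u).
Proof. by elim: i => //= i IH h; apply/subL0/IH. Qed.
Lemma subsum n (G : 'I_n -> V) : (forall i, U (G i)) -> U (\sum_(i < n) G i).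
Proof.
move=> h; elim: n G h => [|n IH] G h; first by rewrite big_ord0; apply: sub0.
by rewrite big_ord_recr /=; apply: subD => //; apply: IH.
Qed.
Lemma subpact p u : U u -> U (pact p u).
Proof. by move=> h; apply: subsum => i; apply/subZ/subiter. Qed.
End Sub.

Lemma feq_mul x u q r : pact q x = pact r u ->
  forall s, pact (s * q) x = pact (s * r) u.
Proof. by move=> h s; rewrite !pactM h. Qed.

Lemma part1 (tf : torsion_free rho) : simple_module rho -> R_irreducible_rat rho.
Proof.
case=> _ [u0 [_ u00]] simp; split.
  exists (u0, 1); split; first by rewrite /is_frac oner_neq0.
  by move/(frac_eqP tf); rewrite /feq /= !pact1.
move=> W [Wcl [Wfr W01] Wadd Wsc [WL1 WLm1 WL0]].
have W1 : forall v, W (v, 1) -> W (v, 1) by [].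
pose U v := W (v, 1).
have sU : is_submodule rho U.
  split.
  - exact: W01.
  - move=> u w hu hw; have := Wadd _ _ hu hw.
    by rewrite /frac_add /= !pact1 mulr1.
  - move=> a u hu; have := Wsc a%:P 1 _ (oner_neq0 _) hu.
    by rewrite /frac_scale /= pactC mulr1.
  split.
  - move=> u hu; have := Wsc (-1)%:P 1 _ (oner_neq0 _) (WL1 _ hu).
    rewrite /frac_scale /rat_Lp1 /= pactC comp_polyC mulr1 /Defs.L1.
    by rewrite scaleN1r opprK.
  - move=> u hu; have := WLm1 _ hu.
    by rewrite /rat_Lm1 /= comp_polyC.
  - move=> u hu; have := Wsc (- 2%:R)%:P 1 _ (oner_neq0 _) (WL0 _ hu).
    rewrite /frac_scale /rat_L0 /= pactC mulr1 /Defs.L0 scalerN scaleNr opprK.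
    by rewrite scalerA mulfV ?two_neq0 // scale1r.
case: (classic (forall x, W x -> frac_eq rho x (0, 1))) => [|hn]; [by left|right].
have [[x1 x2] hx] := not_all_ex_not _ _ hn.
have [Wx nx] : W (x1, x2) /\ ~ frac_eq rho (x1, x2) (0, 1) by tauto.
have x20 : x2 != 0 by have := Wfr _ Wx.
have x10 : x1 != 0.
  apply: contra_notN nx => /eqP ->; apply/(frac_eqP tf).
  by rewrite /feq /= !pactr0.
have Ux1 : U x1.
  have := Wsc x2 1 _ (oner_neq0 _) Wx; rewrite /frac_scale /= mul1r => h.
  apply: (Wcl _ _ _ _ _ h); rewrite /is_frac ?oner_neq0 //.
  by apply/(frac_eqP tf); rewrite /feq /= pact1.
have Uall : forall u, U u.
  case: (simp U sU (fun _ _ => I)) => [h|h u]; last by apply: h.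
  by move: x10; rewrite (h _ Ux1) eqxx.
move=> [v p] fp; have := Wsc 1 p _ fp (Uall v).
by rewrite /frac_scale /= pact1 mulr1.
Qed.

Lemma sh1E p : p \Po ('X + 1) = sh 1 p.
Proof. by rewrite /sh polyC1. Qed.
Lemma shN1E p : p \Po ('X - 1) = sh (-1) p.
Proof. by rewrite /sh polyCN polyC1. Qed.

Lemma irr_essential (tf : torsion_free rho) : R_irreducible_rat rho ->
  forall U, is_submodule rho U -> (exists u, U u /\ u <> 0) -> essential rho U.
Proof.
move=> [_ irr] U sU [u0 [Uu0 u00]].
pose W x := is_frac x /\ exists u q, [/\ U u, q != 0 & feq x (u, q)].
have rW : rat_submodule rho W.
  split.
  - move=> [x1 x2] [y1 y2] fx fy /(frac_eqP tf) e [_ [u [q [Uu q0 e2]]]].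
    split=> //; exists u, q; split=> //; move: e e2; rewrite /feq /= => e e2.
    apply: (pact_inj tf fx).
    by rewrite (pactC_comm x2 q) -e (pactC_comm q y2) e2 (pactC_comm y2 x2).
  - split=> [x []//|]; split; first by rewrite /is_frac oner_neq0.
    by exists 0, 1; split; rewrite ?oner_neq0 //; first exact: (sub0 sU).
  - move=> [x1 x2] [y1 y2] [fx [u [q [Uu q0 e]]]] [fy [u' [q' [Uu' q0' e']]]].
    split; first by rewrite /is_frac mulf_neq0.
    exists (pact q' u + pact q u'), (q * q'); split.
    + by apply: (subD sU); apply: (subpact sU).
    + by rewrite mulf_neq0.
    move: e e'; rewrite /feq /frac_add /= => e e'.
    rewrite !pactDr; congr (_ + _).
      rewrite -!pactM (_ : q * q' * y2 = (q' * y2) * q); last by ring.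
      by rewrite pactM e -!pactM; congr pact; ring.
    rewrite -!pactM (_ : q * q' * x2 = (q * x2) * q'); last by ring.
    by rewrite pactM e' -!pactM; congr pact; ring.
  - move=> a b [x1 x2] b0 [fx [u [q [Uu q0 e]]]].
    split; first by rewrite /is_frac mulf_neq0.
    exists (pact a u), (b * q); split; rewrite ?mulf_neq0 //; first exact: (subpact sU).
    move: e; rewrite /feq /frac_scale /= => e.
    rewrite -!pactM.
    have -> : b * q * a = (b * a) * q by rewrite -mulrA (mulrC q) mulrA.
    have -> : b * x2 * a = (b * a) * x2 by rewrite -mulrA (mulrC x2) mulrA.
    by rewrite !pactM e.
  split.
  - move=> [x1 x2] [fx [u [q [Uu q0 e]]]].
    rewrite /rat_Lp1 /= sh1E; split; first by rewrite /is_frac sh_eq0.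
    exists (L1 u), (sh 1 q); split; rewrite ?sh_eq0 //; first exact: (subL1 sU).
    move: e; rewrite /feq /= => e; by rewrite -!L1_pact e.
  - move=> [x1 x2] [fx [u [q [Uu q0 e]]]].
    rewrite /rat_Lm1 /= shN1E; split; first by rewrite /is_frac sh_eq0.
    exists (Lm1 u), (sh (-1) q); split; rewrite ?sh_eq0 //; first exact: (subLm1 sU).
    move: e; rewrite /feq /= => e; by rewrite -!Lm1_pact e.
  - move=> [x1 x2] [fx [u [q [Uu q0 e]]]].
    split=> //; exists (L0 u), q; split=> //; first exact: (subL0 sU).
    move: e; rewrite /feq /= => e; by rewrite (pactL0 q x1) (pactL0 x2 u) e.
case: (irr W rW) => [h|h] v.
  have : W (u0, 1).
    split; first by rewrite /is_frac oner_neq0.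
    by exists u0, 1; split; rewrite ?oner_neq0.
  move/h/(frac_eqP tf); rewrite /feq /= pact1 pactr0 => e.
  by case: u00.
have [_ [u [q [Uu q0 e]]]] := h (v, 1) (oner_neq0 _).
by exists q => //; move: e; rewrite /feq /= pact1 => ->.
Qed.

Definition inspan (us : seq V) x := exists a : nat -> {poly C},
  x = \sum_(j < size us) pact (a j) (nth 0 us j).

Lemma pact_sumr p n (G : 'I_n -> V) : pact p (\sum_(i < n) G i) = \sum_(i < n) pact p (G i).
Proof. by apply: additive_sum => u w; rewrite pactDr. Qed.

Lemma pact_suml n (P : 'I_n -> {poly C}) v : pact (\sum_(i < n) P i) v = \sum_(i < n) pact (P i) v.
Proof.
elim: n P => [|n IH] P; first by rewrite !big_ord0 pact0.
by rewrite !big_ord_recr /= pactD IH.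
Qed.

Lemma inspan_pact us p x : inspan us x -> inspan us (pact p x).
Proof.
case=> a ->; exists (fun j => p * a j); rewrite pact_sumr; apply: eq_bigr => j _.
by rewrite pactM.
Qed.

Lemma comb_zip coefs (basis : seq (V * {poly C})) :
  size coefs = size basis -> all (fun c : {poly C} * {poly C} => c.2 != 0) coefs ->
  all (@is_frac C V) basis ->
  (frac_comb rho (zip coefs basis)).2 != 0 /\
  inspan (map fst basis) (frac_comb rho (zip coefs basis)).1.
Proof.
elim: coefs basis => [|c cs IH] [|b bs] //=.
  move=> _ _ _; split; first exact: oner_neq0.
  by exists (fun _ => 0); rewrite big_ord0.
move=> [sz] /andP[c0 call] /andP[b0 ball].
have [d0 [a ea]] := IH bs sz call ball.
set nd := frac_comb rho (zip cs bs) in d0 ea *.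
rewrite /frac_add /frac_scale /=; split.
  by rewrite !mulf_neq0.
exists (fun j => if j is j'.+1 then (c.2 * b.2) * a j' else nd.2 * c.1).
rewrite big_ord_recl /= -pactM; congr (_ + _).
by rewrite ea pact_sumr; apply: eq_bigr => j _; rewrite pactM.
Qed.

Lemma spanning (tf : torsion_free rho) : finite_rank rho ->
  exists us : seq V, forall x, exists2 d, d != 0 & inspan us (pact d x).
Proof.
case=> basis [ball hb]; exists (map fst basis) => x.
have [coefs [sz call e]] := hb (x, 1) (oner_neq0 _).
have [d0 hs] := comb_zip sz call ball.
exists (frac_comb rho (zip coefs basis)).2 => //.
move/(frac_eqP tf): e; rewrite /feq /= pact1 => ->.
exact: hs.
Qed.

Lemma dependence (us : seq V) :
  (forall x, exists2 d, d != 0 & inspan us (pact d x)) ->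
  forall f : nat -> V, exists cs : nat -> {poly C},
    (exists k, (k <= size us)%N /\ cs k != 0) /\
    \sum_(k < (size us).+1) pact (cs k) (f k) = 0.
Proof.
move=> hsp f; set N := size us.
have hd : forall x, {d : {poly C} | d != 0 /\ inspan us (pact d x)}.
  move=> x; apply: constructive_indefinite_description.
  by have [d d0 h] := hsp x; exists d.
pose dd k := sval (hd (f k)).
have ha : forall k, {a : nat -> {poly C} |
    pact (dd k) (f k) = \sum_(j < N) pact (a j) (nth 0 us j)}.
  move=> k; apply: constructive_indefinite_description.
  exact: (proj2 (svalP (hd (f k)))).
pose aa k := sval (ha k).
have hdd : forall k, dd k != 0 /\ pact (dd k) (f k) = \sum_(j < N) pact (aa k j) (nth 0 us j).
  by move=> k; split; [exact: (proj1 (svalP (hd (f k)))) | exact: (svalP (ha k))].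
pose M : 'M[{poly C}]_(N.+1) := \matrix_(k, j) (if (j < N)%N then aa k j else 0).
have dM : \det M = 0.
  rewrite (expand_det_col _ ord_max) big1 // => i _.
  by rewrite mxE /= ltnn mul0r.
have [v v0 vM] : exists2 v : 'rV_(N.+1), v != 0 & v *m M = 0.
  by apply/det0P/eqP.
have [i vi] : exists i, v 0 i != 0.
  apply: not_all_not_ex => h; case/eqP: v0; apply/rowP => i.
  by rewrite mxE; apply/eqP/negPn/negP; exact: h.
exists (fun k => v 0 (inord k) * dd k); split.
  exists i; split; first by rewrite -ltnS ltn_ord.
  by rewrite inord_val mulf_neq0 //; case: (hdd i).
under eq_bigr => k _ do rewrite inord_val pactM (proj2 (hdd k)) pact_sumr.
rewrite exchange_big /= big1 // => j _.
under eq_bigr => k _ do rewrite -pactM.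
rewrite -pact_suml.
have -> : \sum_(k < N.+1) v 0 k * aa k j = (v *m M) 0 (widen_ord (leqnSn N) j).
  by rewrite mxE; apply: eq_bigr => k _; rewrite mxE /= ltn_ord.
by rewrite vM mxE pact0.
Qed.

Lemma Aneg (A : V -> V) : (forall u w, A (u + w) = A u + A w) ->
  A 0 = 0 /\ forall u, A (- u) = - A u.
Proof.
move=> AD; have A0 : A 0 = 0.
  have := AD 0 0; rewrite addr0 => /(congr1 (fun x => x - A 0)).
  by rewrite addrK subrr.
split=> // u; apply/eqP; rewrite -addr_eq0 -AD addNr A0.
by [].
Qed.

Section Gen.
Variable tf : torsion_free rho.
Variable N : nat.
Hypothesis dep : forall f : nat -> V, exists cs : nat -> {poly C},
    (exists k, (k <= N)%N /\ cs k != 0) /\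
    \sum_(k < N.+1) pact (cs k) (f k) = 0.

Lemma inj_gen (A B : V -> V) (tau : {poly C} -> {poly C}) (m : nat -> {poly C}) x :
  (forall u w, A (u + w) = A u + A w) ->
  (forall p w, A (pact p w) = pact (tau p) (A w)) ->
  (forall p, p != 0 -> tau p != 0) -> (forall k, m k != 0) ->
  A x = 0 -> (forall k, A (iter k.+1 B x) = pact (m k) (iter k B x)) -> x = 0.
Proof.
move=> AD Ap tau0 m0 Ax AB.
have [A0 _] := Aneg AD.
have [cs [wit hs]] := dep (fun k => iter k B x).
suff H : forall K cs, (exists k, (k <= K)%N /\ cs k != 0) ->
  \sum_(k < K.+1) pact (cs k) (iter k B x) = 0 -> x = 0 by exact: H hs.
elim=> [|K IH] {wit hs} cs [k [kK ck]] hs.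
  move: kK ck; rewrite leqn0 => /eqP -> c0.
  by move: hs; rewrite big_ord1 /=; apply: (pact_eq0 tf).
have [c0|c0] := eqVneq (cs K.+1) 0.
  move: hs; rewrite big_ord_recr /= c0 pact0 addr0; apply: IH.
  exists k; split=> //; move: kK; rewrite leq_eqVlt ltnS => /orP[/eqP kE|//].
  by rewrite kE c0 eqxx in ck.
apply: (IH (fun k => tau (cs k.+1) * m k)).
  by exists K; split=> //; rewrite mulf_neq0 ?tau0.
have := congr1 A hs; rewrite A0 (additive_sum _ AD) big_ord_recl /= Ap Ax pactr0 add0r.
move=> h; apply: (eq_trans _ h); apply: eq_bigr => i _.
rewrite /bump add1n add0n Ap -[B (iter i B x)]/(iter i.+1 B x) AB pactM.
by [].
Qed.

Lemma surj_gen (A : V -> V) (tau tau' : {poly C} -> {poly C}) :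
  (forall u w, A (u + w) = A u + A w) ->
  (forall p w, A (pact p w) = pact (tau p) (A w)) ->
  (forall p, tau (tau' p) = p) -> (forall p, p != 0 -> tau' p != 0) ->
  (forall y, A y = 0 -> y = 0) ->
  forall x, exists2 h, h != 0 & exists y, pact h x = A y.
Proof.
move=> AD Ap tauK tau0 Ainj x.
have [A0 AN] := Aneg AD.
have [cs [wit hs]] := dep (fun k => iter k A x).
suff H : forall K cs, (exists k, (k <= K)%N /\ cs k != 0) ->
  \sum_(k < K.+1) pact (cs k) (iter k A x) = 0 ->
  exists2 h, h != 0 & exists y, pact h x = A y by exact: H hs.
elim=> [|K IH] {wit hs} cs [k [kK ck]] hs.
  move: kK ck; rewrite leqn0 => /eqP -> c0.
  exists (cs 0) => //; exists 0; move: hs; rewrite big_ord1 /= A0; exact.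
move: hs; rewrite big_ord_recl /=.
set Y := \sum_(i < K.+1) pact (tau' (cs i.+1)) (iter i A x).
have -> : \sum_(i < K.+1) pact (cs (lift ord0 i)) (iter (lift ord0 i) A x) = A Y.
  rewrite /Y (additive_sum _ AD); apply: eq_bigr => i _.
  by rewrite lift0 Ap tauK.
move=> hs.
have [c0|c0] := eqVneq (cs 0) 0; last first.
  exists (cs 0) => //; exists (- Y); rewrite AN.
  by apply/eqP; rewrite -addr_eq0 hs.
move: hs; rewrite c0 pact0 add0r => /Ainj hY.
apply: (IH (fun i => tau' (cs i.+1))) => //.
case: k kK ck => [|k] kK ck; first by rewrite c0 eqxx in ck.
by exists k; split; rewrite ?tau0.
Qed.
End Gen.

Definition mu (k : nat) : {poly C} := (k.+1)%:R *: (2%:R *: 'X - (k%:R)%:P).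
Definition nu (k : nat) : {poly C} := (k.+1)%:R *: ((- 2%:R) *: 'X - (k%:R)%:P).

Lemma mu_neq0 k : mu k != 0.
Proof.
apply/eqP => /(congr1 (fun p : {poly C} => p`_1)).
rewrite /mu coefZ coefB coefZ coefX coefC /= mulr1 subr0 coef0 => /eqP.
by rewrite mulf_eq0 !pnatr_eq0.
Qed.

Lemma nu_neq0 k : nu k != 0.
Proof.
apply/eqP => /(congr1 (fun p : {poly C} => p`_1)).
rewrite /nu coefZ coefB coefZ coefX coefC /= mulr1 subr0 coef0 => /eqP.
by rewrite mulf_eq0 oppr_eq0 !pnatr_eq0.
Qed.

Lemma mu_rec k : sh (-1) (mu k) + 2%:R *: 'X = mu k.+1.
Proof.
rewrite /mu /sh comp_polyZ comp_polyB comp_polyZ comp_polyX comp_polyC.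
rewrite -!mul_polyC !polyC_natr polyCN polyC1.
rewrite -[(k.+2)%:R]natr1 -[(k.+1)%:R]natr1; ring.
Qed.

Lemma nu_rec k : sh 1 (nu k) - 2%:R *: 'X = nu k.+1.
Proof.
rewrite /nu /sh comp_polyZ comp_polyB comp_polyZ comp_polyX comp_polyC.
rewrite -!mul_polyC !polyC_natr polyCN polyC1.
rewrite -[(k.+2)%:R]natr1 -[(k.+1)%:R]natr1; ring.
Qed.

Lemma Lm10 : Lm1 0 = 0. Proof. exact: linear0. Qed.
Lemma L10 : L1 0 = 0. Proof. by rewrite /Defs.L1 linear0 oppr0. Qed.

Lemma L1_iter_Lm1 x : L1 x = 0 ->
  forall k, L1 (iter k.+1 Lm1 x) = pact (mu k) (iter k Lm1 x).
Proof.
move=> Lx; elim=> [|k IH].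
  rewrite /= L1Lm1 Lx Lm10 add0r /mu scale1r subr0 pactZl -L0_pact.
  by [].
rewrite [iter _.+2 _ _]/= L1Lm1 -[Lm1 (iter k Lm1 x)]/(iter k.+1 Lm1 x) IH.
by rewrite Lm1_pact -mu_rec pactD pactZl -L0_pact.
Qed.

Lemma Lm1_iter_L1 x : Lm1 x = 0 ->
  forall k, Lm1 (iter k.+1 L1 x) = pact (nu k) (iter k L1 x).
Proof.
move=> Lx.
have e : forall y, Lm1 (L1 y) = L1 (Lm1 y) - 2%:R *: L0 y.
  by move=> y; rewrite L1Lm1 addrK.
elim=> [|k IH].
  rewrite /= e Lx L10 sub0r /nu scale1r subr0 pactZl -L0_pact.
  by rewrite scaleNr.
rewrite [iter _.+2 _ _]/= e -[L1 (iter k L1 x)]/(iter k.+1 L1 x) IH.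
by rewrite L1_pact -nu_rec pactB pactZl -L0_pact.
Qed.

Lemma wo (P : nat -> Prop) : (exists n, P n) -> exists n, P n /\ forall m, P m -> (n <= m)%N.
Proof.
case=> n Pn; elim/ltn_ind: n Pn => n IH Pn.
case: (classic (exists m, (m < n)%N /\ P m)) => [[m [mn Pm]]|hn].
  exact: IH m mn Pm.
exists n; split=> // m Pm; rewrite leqNgt; apply/negP => mn; apply: hn; exists m; split.
  exact: mn.
exact: Pm.
Qed.

Lemma comb_poly (n : nat) (Q : nat -> {poly C} -> Prop) :
  (forall j h q, Q j h -> Q j (q * h)) ->
  (forall j, (j < n)%N -> exists2 h, h != 0 & Q j h) ->
  exists2 h, h != 0 & forall j, (j < n)%N -> Q j h.
Proof.
move=> Qc; elim: n => [|n IH] hq; first by exists 1; rewrite ?oner_neq0.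
have [h h0 hQ] := IH (fun j jn => hq j (ltnW jn)).
have [hn hn0 hnQ] := hq n (ltnSn n).
exists (hn * h); first by rewrite mulf_neq0.
move=> j; rewrite ltnS leq_eqVlt => /orP[/eqP ->|jn].
  by rewrite mulrC; apply: Qc.
by apply: Qc; apply: hQ.
Qed.

Section Final.
Variable tf : torsion_free rho.
Variable us : seq V.
Hypothesis hsp : forall x, exists2 d, d != 0 & inspan us (pact d x).
Local Notation N := (size us).

Lemma dep : forall f : nat -> V, exists cs : nat -> {poly C},
    (exists k, (k <= N)%N /\ cs k != 0) /\
    \sum_(k < N.+1) pact (cs k) (f k) = 0.
Proof. exact: dependence hsp. Qed.

Lemma L1_inj y : L1 y = 0 -> y = 0.
Proof.
move=> Ly; apply: (@inj_gen tf N dep L1 Lm1 (sh 1) mu) => //.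
- exact: L1D.
- exact: L1_pact.
- by move=> p; rewrite sh_eq0.
- exact: mu_neq0.
- exact: L1_iter_Lm1.
Qed.

Lemma Lm1_inj y : Lm1 y = 0 -> y = 0.
Proof.
move=> Ly; apply: (@inj_gen tf N dep Lm1 L1 (sh (-1)) nu) => //.
- exact: Lm1D.
- exact: Lm1_pact.
- by move=> p; rewrite sh_eq0.
- exact: nu_neq0.
- exact: Lm1_iter_L1.
Qed.

Lemma H_exists (A : V -> V) (t : C) :
  (forall p w, A (pact p w) = pact (sh t p) (A w)) ->
  (forall x, exists2 h, h != 0 & exists y, pact h x = A y) ->
  exists2 H, H != 0 & forall j, (j < N)%N ->
    exists z, inspan us z /\ pact H (nth 0 us j) = A z.
Proof.
move=> Ap As; apply: comb_poly.
  move=> j h q [z [zs e]]; exists (pact (sh (- t) q) z); split.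
    exact: inspan_pact.
  by rewrite pactM e Ap shKN.
move=> j _; have [h1 h10 [y ey]] := As (nth 0 us j).
have [d d0 dy] := hsp y.
exists (sh t d * h1); first by rewrite mulf_neq0 ?sh_eq0.
by exists (pact d y); split=> //; rewrite pactM ey Ap.
Qed.

Section W.
Variable W : V -> Prop.
Hypothesis sW : is_submodule rho W.
Hypothesis nzW : exists w, W w /\ w <> 0.
Hypothesis essW : essential rho W.

Definition IW g := forall j, (j < N)%N -> W (pact g (nth 0 us j)).

Lemma IW_mul g q : IW g -> IW (q * g).
Proof. by move=> h j jn; rewrite pactM; apply: (subpact sW); apply: h. Qed.

Lemma IW_sub g q : IW g -> IW q -> IW (g - q).
Proof.
move=> hg hq j jn; rewrite pactB; apply: (subD sW); first exact: hg.
by apply: (subN sW); apply: hq.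
Qed.

Lemma IW_span g z : IW g -> inspan us z -> W (pact g z).
Proof.
move=> hg [a ->]; rewrite pact_sumr; apply: (subsum sW) => j.
by rewrite pactC_comm; apply: (subpact sW); apply: hg.
Qed.

Lemma IW_nonzero : exists2 g, g != 0 & IW g.
Proof.
apply: (comb_poly (Q := fun j g => W (pact g (nth 0 us j)))).
  by move=> j h q hW; rewrite pactM; apply: (subpact sW).
by move=> j _; have [p p0 hp] := essW (nth 0 us j); exists p.
Qed.

Lemma IW_shift (A : V -> V) (t : C) H :
  (forall p w, A (pact p w) = pact (sh t p) (A w)) ->
  (forall u, W u -> W (A u)) ->
  (forall j, (j < N)%N -> exists z, inspan us z /\ pact H (nth 0 us j) = A z) ->
  forall g, IW g -> IW (sh t g * H).
Proof.
move=> Ap AW hH g hg j jn; have [z [zs e]] := hH j jn.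
by rewrite pactM e -Ap; apply: AW; apply: IW_span.
Qed.

Lemma IW_gen : exists2 g0, g0 != 0 /\ IW g0 & forall q, IW q -> g0 %| q.
Proof.
have [n [[g0 [g00 [hg0 sz]]] hmin]] :=
  wo (P := fun n => exists g, g != 0 /\ IW g /\ size g = n)
     (let: ex_intro2 g g0 hg := IW_nonzero in ex_intro _ (size g) (ex_intro _ g (conj g0 (conj hg erefl)))).
exists g0 => // q hq; apply/modp_eq0P.
have hr : IW (q %% g0).
  have -> : q %% g0 = q - q %/ g0 * g0 by rewrite {2}(divp_eq q g0) addrC addKr.
  by apply: IW_sub => //; apply: IW_mul.
apply/eqP; apply/negP => r0'.
have r0 : q %% g0 != 0 by apply/negP.
have := hmin (size (q %% g0)) (ex_intro _ (q %% g0) (conj r0 (conj hr erefl))).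
by rewrite -sz leqNgt ltn_modp g00.
Qed.
End W.

Lemma L1_surj : forall x, exists2 h, h != 0 & exists y, pact h x = L1 y.
Proof.
apply: (@surj_gen N dep L1 (sh 1) (sh (-1))).
- exact: L1D.
- exact: L1_pact.
- by move=> p; rewrite shKN.
- by move=> p; rewrite sh_eq0.
- exact: L1_inj.
Qed.

Lemma Lm1_surj : forall x, exists2 h, h != 0 & exists y, pact h x = Lm1 y.
Proof.
apply: (@surj_gen N dep Lm1 (sh (-1)) (sh 1)).
- exact: Lm1D.
- exact: Lm1_pact.
- by move=> p; rewrite shK.
- by move=> p; rewrite sh_eq0.
- exact: Lm1_inj.
Qed.

Lemma G_uniform : exists2 G, G != 0 & forall W, is_submodule rho W ->
  essential rho W -> IW W G.
Proof.
have [H H0 hH] := H_exists L1_pact L1_surj.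
have [H' H'0 hH'] := H_exists Lm1_pact Lm1_surj.
have [G G0 hG] := poly_bound H0 H'0.
exists G => // W sW essW.
have [g0 [g00 hg0] gdiv] := IW_gen sW essW.
have d1 : g0 %| sh 1 g0 * H.
  by apply: gdiv; apply: (IW_shift sW L1_pact (subL1 sW) hH hg0).
have d2 : g0 %| sh (-1) g0 * H'.
  by apply: gdiv; apply: (IW_shift sW Lm1_pact (subLm1 sW) hH' hg0).
have gG := hG g0 g00 d1 d2.
by rewrite -(divpK gG); apply: (IW_mul sW).
Qed.

Lemma part2 : R_irreducible_rat rho ->
  exists U : V -> Prop,
    [/\ simple_submodule rho U, essential rho U &
        forall U', simple_submodule rho U' -> forall v, U' v <-> U v].
Proof.
move=> irr; have [G G0 hG] := G_uniform.
have [[[x1 x2] [fx nx]] _] := irr.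
have x10 : x1 != 0.
  apply: contra_notN nx => /eqP ->; apply/(frac_eqP tf).
  by rewrite /feq /= !pactr0.
have [j0 [j0N uj0]] : exists j0, (j0 < N)%N /\ nth 0 us j0 != 0.
  apply: not_all_not_ex => hn.
  have [d d0 [a ea]] := hsp x1.
  move: x10; apply/negP; rewrite negbK; apply/eqP; apply: (pact_eq0 tf d0).
  rewrite ea big1 // => j _.
  have : ~ ((j < N)%N /\ nth 0 us j != 0) by apply: hn.
  rewrite ltn_ord => hj.
  have -> : nth 0 us j = 0 by apply/eqP/negPn/negP => h; apply: hj.
  by rewrite pactr0.
pose u0 := pact G (nth 0 us j0).
have u00 : u0 <> 0 by move/(pact_eq0 tf G0); apply/eqP.
pose Um v := forall W, is_submodule rho W -> (exists w, W w /\ w <> 0) -> W v.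
have Um0 : Um u0.
  move=> W sW nzW; exact: (hG W sW (irr_essential tf irr sW nzW) j0 j0N).
have sUm : is_submodule rho Um.
  split.
  - by move=> W sW _; apply: (sub0 sW).
  - by move=> u w hu hw W sW nzW; apply: (subD sW); [apply: hu|apply: hw].
  - by move=> a u hu W sW nzW; apply: (subZ sW); apply: hu.
  split.
  - by move=> u hu W sW nzW; apply: (subE sW); apply: hu.
  - by move=> u hu W sW nzW; apply: (subF sW); apply: hu.
  - by move=> u hu W sW nzW; apply: (subH sW); apply: hu.
have simpUm : simple_submodule rho Um.
  split=> //; first by exists u0.
  move=> U' sU' _.
  case: (classic (exists w, U' w /\ w <> 0)) => [hw|hn].
    by right=> u hu; apply: hu.
  left=> u hu; apply: NNPP => u0'; apply: hn; exists u; split.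
    exact: hu.
  exact: u0'.
exists Um; split=> //.
  by apply: (irr_essential tf irr sUm); exists u0.
move=> U' [sU' nzU' simpU'] v; split; last by move=> hv; apply: hv.
move=> hv; case: (simpU' Um sUm) => [u hu|h|h]; last exact: h.
  by apply: hu.
by case: u00; apply: h.
Qed.

End Final.

Lemma part2_full (tf : torsion_free rho) : finite_rank rho -> R_irreducible_rat rho ->
  exists U : V -> Prop,
    [/\ simple_submodule rho U, essential rho U &
        forall U', simple_submodule rho U' -> forall v, U' v <-> U v].
Proof.
move=> fr irr; have [us hsp] := spanning tf fr.
exact: (part2 tf hsp irr).
Qed.

End Main.

Theorem theorem7p20 (R : realType) (V : lmodType R[i]) (rho : sl2_module V) :
  finite_rank_torsion_free rho ->
  (simple_module rho -> R_irreducible_rat rho) /\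
  (R_irreducible_rat rho ->
     simple_module rho \/
     exists U : V -> Prop,
       [/\ simple_submodule rho U, essential rho U &
           forall U', simple_submodule rho U' -> forall v, U' v <-> U v]).
Proof.
move=> [tf fr]; split; first exact: part1.
by move=> irr; right; apply: part2_full.
Qed.
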